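(* Let $r\ge6$ and $G\in\mathcal{G}(r,r)$. Then any two distinct configurations in $G$ are disjoint.
   Context: $\mathcal{G}(\Delta,\omega)$ denotes the class of finite simple graphs $G$ with maximum degree $\Delta(G)\le\Delta$ and clique number $\omega(G)\le\omega$. For $G\in\mathcal{G}(r,r)$, a configuration in $G$ is a set $C\subseteq V(G)$ with $|C|=r+1$ such that the induced subgraph $G[C]$ is a complete graph with exactly two edges missing. *)

(* Defs.v *)
From mathcomp Require Import all_boot.
Set Implicit Arguments. Unset Strict Implicit. Unset Printing Implicit Defensive.

Definition simple_graph (T : finType) (e : rel T) : Prop :=
  symmetric e /\ irreflexive e.

Definition nbhd (T : finType) (e : rel T) (x : T) : {set T} := [set y | e x y].
Definition degree (T : finType) (e : rel T) (x : T) : nat := #|nbhd e x|.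

Definition is_clique (T : finType) (e : rel T) (S : {set T}) : bool :=
  [forall x in S, forall y in S, (x != y) ==> e x y].

Definition in_class (T : finType) (e : rel T) (Delta omega : nat) : Prop :=
  simple_graph e /\
  (forall x : T, degree e x <= Delta) /\
  (forall S : {set T}, is_clique e S -> #|S| <= omega).

Definition missing_edges (T : finType) (e : rel T) (C : {set T}) : {set {set T}} :=
  [set [set x; y] | x in C, y in C & (x != y) && ~~ e x y].

Definition configuration (T : finType) (e : rel T) (r : nat) (C : {set T}) : Prop :=
  #|C| = r.+1 /\ #|missing_edges e C| = 2.

(* Main.v *)
Require Import Defs.
From mathcomp Require Import all_boot.
From mathcomp Require Import zify.

Set Implicit Arguments. Unset Strict Implicit. Unset Printing Implicit Defensive.

Section Aux.
Variable T : finType.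

Lemma card_pairs (S : {set T * T}) :
  #|S| = \sum_(x : T) #|[set y | (x, y) \in S]|.
Proof.
rewrite -sum1_card.
rewrite (eq_bigr (fun x => \sum_(y in [set y | (x, y) \in S]) 1)); last first.
  by move=> x _; rewrite sum1_card.
rewrite pair_big_dep /=.
by apply: eq_bigl => -[a b]; rewrite !inE.
Qed.

Variable e : rel T.

Definition NP (C : {set T}) : {set T * T} :=
  [set p : T * T | [&& p.1 \in C, p.2 \in C, p.1 != p.2 & ~~ e p.1 p.2]].

Lemma NP_bound (C : {set T}) : #|NP C| <= 2 * #|missing_edges e C|.
Proof.
pose f := fun p : T * T => ([set p.1; p.2], (enum_rank p.1 < enum_rank p.2)%N).
have inj : {in NP C &, injective f}.
  move=> [a b] [c d]; rewrite !inE /= => /and4P [_ _ ab _] /and4P [_ _ cd _].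
  rewrite /f /= => -[E R].
  have ha : a \in [set c; d] by rewrite -E set21.
  have hb : b \in [set c; d] by rewrite -E set22.
  move: ha hb ab R => /set2P [->|->] /set2P [->|->] //.
  - by rewrite eqxx.
  - move=> _; case: (ltngtP (enum_rank c) (enum_rank d)) => // H _.
    by move: cd; rewrite (enum_rank_inj (val_inj H)) eqxx.
  - by rewrite eqxx.
rewrite -(card_in_imset inj).
have sub : [set f x | x in NP C] \subset setX (missing_edges e C) [set: bool].
  apply/subsetP => q /imsetP [[a b]]; rewrite !inE /= => /and4P [aC bC ab nab] ->.
  rewrite andbT /f /=.
  apply/imset2P; apply: (@Imset2spec _ _ _ _ _ _ _ a b) => //.
  by rewrite !inE bC ab nab.
apply: leq_trans (subset_leq_card sub) _.
by rewrite cardsX cardsT card_bool mulnC.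
Qed.

Hypothesis sym : symmetric e.
Hypothesis irr : irreflexive e.
Variable r : nat.
Hypothesis degb : forall x : T, degree e x <= r.

Lemma fiber_bound (C B : {set T}) (x : T) :
  #|C| = r.+1 -> x \in C -> [disjoint B & C] ->
  #|[set y in B | e x y]| <= #|[set y in C | (x != y) && ~~ e x y]|.
Proof.
move=> cC xC dBC.
set P := [set y in C | e x y].
set Q := [set y in C | (x != y) && ~~ e x y].
set R := [set y in B | e x y].
have h1 : #|P| + #|Q| = r.
  have U : P :|: Q = C :\ x.
    apply/setP => y; rewrite !inE.
    case: (eqVneq y x) => [->|ne]; first by rewrite irr andbF.
    by case: (e x y); case: (y \in C).
  have I : P :&: Q = set0.
    by apply/setP => y; rewrite !inE; case: (e x y); rewrite ?andbF ?andbT.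
  have := cardsUI P Q; rewrite U I cards0 addn0 => <-.
  have := cardsD1 x C; rewrite xC cC; lia.
have h2 : #|P :|: R| <= r.
  apply: leq_trans (degb x); apply: subset_leq_card.
  by apply/subsetP => y; rewrite !inE => /orP [/andP [_ ->]|/andP [_ ->]].
have h3 : P :&: R = set0.
  apply/setP => y; rewrite !inE.
  case yC: (y \in C); case yB: (y \in B) => //=.
  by rewrite (disjointFr dBC yB) in yC.
  by rewrite andbF.
have := cardsUI P R; rewrite h3 cards0 addn0; lia.
Qed.

Definition XP (C D : {set T}) : {set T * T} :=
  [set p | (p.1 \in C :&: D) && (p \in NP C)].
Definition ZP (C D : {set T}) : {set T * T} :=
  [set p : T * T | [&& p.1 \in C :&: D, p.2 \in D :\: C & ~~ e p.1 p.2]].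

Lemma lemA (C D : {set T}) : #|C| = r.+1 ->
  #|C :&: D| * #|D :\: C| <= #|XP C D| + #|ZP C D|.
Proof.
move=> cC.
set E := [set p : T * T | e p.1 p.2].
set S := setX (C :&: D) (D :\: C).
rewrite -cardsX -/S -(cardsID E S).
apply: leq_add.
  rewrite (card_pairs (S :&: E)) (card_pairs (XP C D)); apply: leq_sum => x _.
  case xI: (x \in C :&: D).
    have /andP [xC xD] : (x \in C) && (x \in D) by rewrite -in_setI.
    have -> : [set y | (x, y) \in S :&: E] = [set y in D :\: C | e x y].
      by apply/setP => y; rewrite !inE /= xC xD.
    have -> : [set y | (x, y) \in XP C D] = [set y in C | (x != y) && ~~ e x y].
      by apply/setP => y; rewrite !inE /= xC xD.
    apply: fiber_bound => //.
    rewrite -setI_eq0; apply/eqP/setP => y; rewrite !inE.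
    by case: (y \in C); rewrite ?andbF.
  have -> : [set y | (x, y) \in S :&: E] = set0.
    by apply/setP => y; rewrite !inE /= -(in_setI x) xI.
  by rewrite cards0.
apply: subset_leq_card; apply/subsetP => -[a b]; rewrite !inE /=.
by case: (e a b); case: (a \in C); case: (a \in D); case: (b \in C); case: (b \in D).
Qed.

Lemma lemB (C D : {set T}) : #|XP C D| + #|ZP D C| <= #|NP C|.
Proof.
pose sw := fun p : T * T => (p.2, p.1).
have swi : injective sw by move=> [a b] [c d] [-> ->].
rewrite -(card_imset (ZP D C) swi).
set Y := sw @: ZP D C.
have I : XP C D :&: Y = set0.
  apply/setP => -[a b]; rewrite !inE /=.
  apply/negbTE/negP => /andP [/andP [/andP [_ aD] _] /imsetP [[c d]]].
  rewrite !inE /= => /and3P [_ /andP [dD _] _] [Ea _].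
  by rewrite Ea (negbTE dD) in aD.
have := cardsUI (XP C D) Y; rewrite I cards0 addn0 => <-.
apply: subset_leq_card; apply/subsetP => -[a b]; rewrite inE => /orP [].
  by rewrite !inE => /andP [].
move=> /imsetP [[c d]]; rewrite !inE /= => /and3P [/andP [cD cC] /andP [dD dC] ncd] [-> ->] /=.
rewrite dC cC /= sym ncd andbT.
by apply/eqP => E; move: dD; rewrite E cD.
Qed.

Lemma main_ineq (C D : {set T}) : #|C| = r.+1 -> #|D| = r.+1 ->
  #|C :&: D| * #|D :\: C| + #|C :&: D| * #|C :\: D| <= #|NP C| + #|NP D|.
Proof.
move=> cC cD.
have h1 := lemA D cC. have h2 := lemA C cD.
have h3 := lemB C D. have h4 := lemB D C.
rewrite setIC in h2.
lia.
Qed.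

End Aux.

Theorem mainTheorem9 (r : nat) (T : finType) (e : rel T) :
  6 <= r -> in_class e r r ->
  forall C1 C2 : {set T},
    configuration e r C1 -> configuration e r C2 -> C1 != C2 ->
    [disjoint C1 & C2].
Proof.
move=> r6 [[sym irr] [degb _]] C1 C2 [c1 m1] [c2 m2] neq.
rewrite -setI_eq0; apply/negPn/negP => ne0.
have kpos : 0 < #|C1 :&: C2| by rewrite card_gt0.
have kle : #|C1 :&: C2| <= r.
  rewrite leqNgt; apply/negP => H.
  have E1 : C1 :&: C2 = C1.
    by apply/eqP; rewrite eqEcard subsetIl c1.
  have E2 : C1 :&: C2 = C2.
    by apply/eqP; rewrite eqEcard subsetIr c2.
  by move: neq; rewrite -E1 E2 eqxx.
have h := main_ineq sym irr degb c1 c2.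
have n1 := NP_bound e C1. have n2 := NP_bound e C2.
rewrite m1 in n1; rewrite m2 in n2.
rewrite cardsD (cardsD C1) c1 c2 setIC in h.
rewrite setIC in h.
nia.
Qed.
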